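(* Let $\{Q(C;\alpha)\}$ be a filtration of simplicial complexes on a finite set $C$. For every $\alpha\ge0$, the inclusion $\mathrm{HoPeS}(C;\alpha)\to Q(C;\alpha)$ induces an isomorphism $H_1(\mathrm{HoPeS}(C;\alpha);\mathbb{Z}_2)\to H_1(Q(C;\alpha);\mathbb{Z}_2)$.
   Context: A filtration on a finite set $C$: nested finite simplicial complexes $Q(C;\alpha)$, $\alpha\ge0$, with vertex set $C$, $Q(C;0)=C$, each simplex entering at a minimal scale; the final complex is connected. Edge length $|e|=2\min\{\alpha:e\subset Q(C;\alpha)\}$. $\mathrm{MST}(C)$ is a minimum total length spanning tree on $C$ using edges of the filtration; $\mathrm{MST}(C;\alpha)$ removes from it all open edges of length $>2\alpha$. Homology with $\mathbb{Z}_2$ coefficients. An edge is critical if its addition creates a new class in $H_1$ that does not immediately die; its birth is its entry scale. Deaths of critical edges: at scale $\alpha$, let $K_1,\dots,K_s$ be the critical edges with birth $\le\alpha$ not yet assigned a death; $[K_1],\dots,[K_s]$ form a basis of $H_1((\mathrm{MST}(C;\alpha)\cup\bigcup K_j)/\mathrm{MST}(C;\alpha))$; let $f$ be the map into $H_1(Q(C;\alpha)/\mathrm{MST}(C;\alpha))$ induced by inclusion; take a basis $b_1,\dots,b_r$ of $\ker f$, $b_i=\sum_j c_{ij}[K_j]$, and solve $\sum_j c_{ij}x_j=0$ over $\mathbb{Z}_2$ with $r$ leading variables chosen by the elder rule (the leading set whose critical edges have greatest combined birth); each $K_i$ with $i$ leading gets death $\alpha$. $\mathrm{HoPeS}(C)$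 is the union of $\mathrm{MST}(C)$ and all critical edges labelled by (birth, death). The reduced skeleton $\mathrm{HoPeS}(C;\alpha)$ is obtained from $\mathrm{HoPeS}(C)$ by removing all edges of length $>2\alpha$ and all critical edges with death $\le\alpha$. *)

(* Defs.v *)
From HB Require Import structures.
From mathcomp Require Import all_boot all_order all_algebra.
Set Implicit Arguments. Unset Strict Implicit. Unset Printing Implicit Defensive.
Import Order.TTheory GRing.Theory Num.Theory.
Local Open Scope ring_scope.

(* Symmetric difference = addition of Z_2-chains represented as sets. *)
Definition sdiff (T : finType) (A B : {set T}) : {set T} := (A :\: B) :|: (B :\: A).

Section HoPeS.
Variable R : realFieldType.
Variable C : finType.

(* A simplex is a nonempty subset of C; a complex is a set of simplices. *)
Definition is_edge (e : {set C}) : bool := #|e| == 2%N.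
Definition is_tri (t : {set C}) : bool := #|t| == 3%N.
Definition edges (S : {set {set C}}) := [set e in S | is_edge e].
Definition tris (S : {set {set C}}) := [set t in S | is_tri t].

Definition bd2 (Tr : {set {set C}}) : {set {set C}} :=
  [set e | is_edge e & odd #|[set t in Tr | e \subset t]|].

Definition cycle1 (S z : {set {set C}}) : Prop :=
  z \subset edges S /\ forall v : C, ~~ odd #|[set e in z | v \in e]|.
Definition bound1 (S z : {set {set C}}) : Prop :=
  exists Tr : {set {set C}}, Tr \subset tris S /\ z = bd2 Tr.

(* The inclusion A -> B (A a subcomplex of B) induces an isomorphism
   H_1(A;Z_2) -> H_1(B;Z_2): the induced map [z] |-> [z] is injective
   (trivial kernel) and surjective. *)
Definition H1_incl_iso (A B : {set {set C}}) : Prop :=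
  [/\ A \subset B,
      (forall z : {set {set C}}, cycle1 A z -> bound1 B z -> bound1 A z) &
      (forall z : {set {set C}}, cycle1 B z -> exists z', cycle1 A z' /\ bound1 B (sdiff z z'))].

(* A filtration is given by the final complex K and the entry scale of every
   simplex; Q(C;alpha) = simplices of K of entry scale <= alpha. *)
Definition is_filtration (K : {set {set C}}) (ent : {set C} -> R) : Prop :=
  [/\ forall s : {set C}, s \in K -> s != set0,
      forall s t : {set C}, s \in K -> t \subset s -> t != set0 -> t \in K /\ ent t <= ent s,
      forall x : C, [set x] \in K /\ ent [set x] = 0,
      (* Q(C;0) = C *)
      forall s : {set C}, s \in K -> (1 < #|s|)%N -> 0 < ent s &
      forall x y : C, connect (fun u v => [set u; v] \in edges K) x y].

Definition Q (K : {set {set C}}) (ent : {set C} -> R) (a : R) : {set {set C}} :=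
  [set s in K | ent s <= a].

(* edge length |e| = 2 min{alpha : e in Q(C;alpha)} *)
Definition elen (ent : {set C} -> R) (e : {set C}) : R := 2%:R * ent e.

Definition adj (E : {set {set C}}) : rel C := fun u v => [set u; v] \in E.

Definition spanning_tree (K T : {set {set C}}) : Prop :=
  [/\ T \subset edges K,
      forall x y : C, connect (adj T) x y &
      ~ (exists p : seq C, [/\ uniq p, (2 < size p)%N & cycle (adj T) p])].

Definition is_MST (K : {set {set C}}) (ent : {set C} -> R) (T : {set {set C}}) : Prop :=
  spanning_tree K T /\
  forall T' : {set {set C}}, spanning_tree K T' -> \sum_(e in T) elen ent e <= \sum_(e in T') elen ent e.

(* An order in which simplices are added one at a time, compatible with the
   filtration (scales, and faces before cofaces). *)
Definition compatible_order (K : {set {set C}}) (ent : {set C} -> R) (rk : {set C} -> nat) : Prop :=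
  [/\ {in K &, injective rk},
      forall s t : {set C}, s \in K -> t \in K -> ent s < ent t -> (rk s < rk t)%N &
      forall s t : {set C}, s \in K -> t \in K -> t \proper s -> (rk t < rk s)%N].

Definition before (K : {set {set C}}) (rk : {set C} -> nat) (e : {set C}) :=
  [set s in K | (rk s < rk e)%N].

(* adding e creates a new 1-cycle *)
Definition positive (K : {set {set C}}) (rk : {set C} -> nat) (e : {set C}) : Prop :=
  exists z : {set {set C}}, cycle1 (e |: before K rk e) z /\ e \in z.

(* critical edge: its addition creates a new class in H_1 that does not die at
   the same scale (i.e. is not, at scale ent e, homologous to an older cycle) *)
Definition critical (K : {set {set C}}) (ent : {set C} -> R) (rk : {set C} -> nat)
    (e : {set C}) : Prop :=
  e \in edges K /\
  exists z : {set {set C}}, [/\ cycle1 (e |: before K rk e) z, e \in z &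
    forall z' : {set {set C}}, cycle1 (before K rk e) z' -> ~ bound1 (Q K ent (ent e)) (sdiff z z')].

Definition MSTa (ent : {set C} -> R) (T : {set {set C}}) (a : R) :=
  [set e in T | elen ent e <= 2%:R * a].

(* critical edges with birth <= alpha not yet assigned a death (death < alpha) *)
Definition Uset (ent : {set C} -> R) (Crit : {set {set C}}) (d : {set C} -> option R) (a : R) :=
  [set e in Crit | (ent e <= a) && ~~ (if d e is Some b then b < a else false)].

(* ker f : combinations (subsets w of U) of classes [K_j] that vanish in
   H_1(Q(C;alpha)/MST(C;alpha)) *)
Definition in_kerf (K : {set {set C}}) (ent : {set C} -> R) (T : {set {set C}}) (a : R)
    (U w : {set {set C}}) : Prop :=
  w \subset U /\
  exists Tr : {set {set C}}, Tr \subset tris (Q K ent a) /\ sdiff w (bd2 Tr) \subset MSTa ent T a.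

(* solutions x (subsets of U = Z_2 vectors) of the system sum_j c_ij x_j = 0 *)
Definition solution (W : {set {set C}} -> Prop) (U x : {set {set C}}) : Prop :=
  x \subset U /\ forall w : {set {set C}}, W w -> ~~ odd #|x :&: w|.

(* L is a set of leading variables: every choice of the free variables
   (those in U \ L) extends to a unique solution. *)
Definition leading (W : {set {set C}} -> Prop) (U L : {set {set C}}) : Prop :=
  L \subset U /\
  forall y : {set {set C}}, y \subset U :\: L -> exists! x : {set {set C}}, solution W U x /\ x :\: L = y.

Definition elder (W : {set {set C}} -> Prop) (U L : {set {set C}}) (birth : {set C} -> R) : Prop :=
  leading W U L /\
  forall L' : {set {set C}}, leading W U L' -> \sum_(e in L') birth e <= \sum_(e in L) birth e.

(* d e = Some b : death b ; d e = None : never dies.  Birth = entry scale. *)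
Definition valid_deaths (K : {set {set C}}) (ent : {set C} -> R) (T Crit : {set {set C}})
    (d : {set C} -> option R) : Prop :=
  (forall a, 0 <= a ->
     elder (in_kerf K ent T a (Uset ent Crit d a)) (Uset ent Crit d a)
           [set e in Uset ent Crit d a | d e == Some a] ent) /\
  (forall (e : {set C}) (b : R), e \in Crit -> d e = Some b -> 0 <= b /\ ent e <= b).

Definition HoPeSa (K : {set {set C}}) (ent : {set C} -> R) (T Crit : {set {set C}})
    (d : {set C} -> option R) (a : R) : {set {set C}} :=
  [set s in K | #|s| == 1%N] :|: MSTa ent T a :|:
  [set e in Crit | (elen ent e <= 2%:R * a) && ~~ (if d e is Some b then b <= a else false)].

End HoPeS.

(* Main.v *)
Require Import Defs.
From HB Require Import structures.
From mathcomp Require Import all_boot all_order all_algebra.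
From Stdlib Require Import Classical.
Import Order.TTheory GRing.Theory Num.Theory.
Set Implicit Arguments. Unset Strict Implicit.

Section Gen.
Variable T : finType.
Implicit Types A B X : {set T}.

Lemma sdiffE A B : sdiff A B = (A :|: B) :\: (A :&: B).
Proof. by apply/setP=> x; rewrite !inE; case: (x \in A); case: (x \in B). Qed.

Lemma in_sdiff A B x : (x \in sdiff A B) = (x \in A) (+) (x \in B).
Proof. by rewrite !inE; case: (x \in A); case: (x \in B). Qed.

Lemma odd_sdiff A B : odd #|sdiff A B| = odd #|A| (+) odd #|B|.
Proof.
rewrite sdiffE cardsD.
have -> : (A :|: B) :&: (A :&: B) = A :&: B.
  by apply/setIidPr; apply: subset_trans (subsetIl _ _) (subsetUl _ _).
rewrite oddB; last exact: subset_leq_card (subset_trans (subsetIl _ _) (subsetUl _ _)).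
have := cardsUI A B; move/(congr1 odd); rewrite !oddD => H.
exact: H.
Qed.

Lemma sdiffI A B X : sdiff A B :&: X = sdiff (A :&: X) (B :&: X).
Proof. apply/setP=> x; rewrite !inE; by case: (x \in A); case: (x \in B); case: (x \in X). Qed.

Lemma sdiffC A B : sdiff A B = sdiff B A.
Proof. by apply/setP=> x; rewrite !in_sdiff addbC. Qed.
Lemma sdiffA A B X : sdiff A (sdiff B X) = sdiff (sdiff A B) X.
Proof. by apply/setP=> x; rewrite !in_sdiff addbA. Qed.
Lemma sdiff0 A : sdiff A set0 = A.
Proof. by apply/setP=> x; rewrite !in_sdiff inE addbF. Qed.
Lemma sdiffvv A : sdiff A A = set0.
Proof. by apply/setP=> x; rewrite !in_sdiff inE addbb. Qed.
Lemma sdiff_sub A B X : A \subset X -> B \subset X -> sdiff A B \subset X.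
Proof. move=> HA HB; apply/subsetP=> x; rewrite in_sdiff.
case xA: (x \in A); first by move=> _; apply: (subsetP HA).
by move=> xB; apply: (subsetP HB). Qed.

Definition dot A B := odd #|A :&: B|.
Lemma dotC A B : dot A B = dot B A.
Proof. by rewrite /dot setIC. Qed.
Lemma dot_sdiffr A B X : dot X (sdiff A B) = dot X A (+) dot X B.
Proof. by rewrite /dot setIC sdiffI odd_sdiff !(setIC X). Qed.
Lemma dot_sdiffl A B X : dot (sdiff A B) X = dot A X (+) dot B X.
Proof. by rewrite dotC dot_sdiffr !(dotC X). Qed.
Lemma dot1 f B : dot [set f] B = (f \in B).
Proof.
rewrite /dot; case fB: (f \in B).
  by rewrite (setIidPl _) ?sub1set ?fB // cards1.
have -> : [set f] :&: B = set0.
  by apply/setP=> y; rewrite !inE; apply/negbTE/andP => [[/eqP ->]]; rewrite fB.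
by rewrite cards0.
Qed.
Lemma setU1_sdiff f A : f \notin A -> f |: A = sdiff [set f] A.
Proof. move=> fA; apply/setP=> y; rewrite in_sdiff !inE; case: eqP => [->|] /=; by [rewrite (negbTE fA)|]. Qed.
Lemma dot0 A : dot set0 A = false.
Proof. by rewrite /dot set0I cards0. Qed.
Lemma dot_sub_eq A B X : A \subset X -> dot A (B :&: X) = dot A B.
Proof. by move=> H; rewrite /dot (setIC B) setIA (setIidPl H). Qed.

Lemma double_perp (W : {set T} -> Prop) (U u : {set T}) :
  W set0 -> (forall x y : {set T}, W x -> W y -> W (sdiff x y)) ->
  (forall w, W w -> w \subset U) -> u \subset U ->
  (forall x : {set T}, x \subset U -> (forall w, W w -> ~~ dot x w) -> ~~ dot x u) -> W u.
Proof.
have [n] := ubnP #|U|; elim: n W U u => // n IH W U u ltU W0 WD WU uU Hperp.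
case: (set_0Vmem U) => [U0|[f fU]].
  by have -> : u = set0 by apply/eqP; rewrite -subset0 -U0.
have ltU' : #|U :\ f| < n by rewrite (cardsD1 f U) fU in ltU.
case: (classic (exists w, W w /\ f \in w)) => [[w0 [Ww0 fw0]]|nofW].
- pose W' := fun w => W w /\ f \notin w.
  pose u' := if f \in u then sdiff u w0 else u.
  have fu' : f \notin u'.
    by rewrite /u'; case fu: (f \in u); rewrite ?in_sdiff ?fu ?fw0.
  have Wu' : W' u'.
    apply: (IH W' (U :\ f)) => //.
    + by split => //; rewrite inE.
    + move=> x y [Wx fx] [Wy fy]; split; first exact: WD.
      by rewrite in_sdiff (negbTE fx) (negbTE fy).
    + move=> w [Ww fw]; apply/subsetP=> y yw; rewrite !inE (subsetP (WU _ Ww)) // andbT.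
      by apply: contraNneq fw => <-.
    + apply/subsetP=> y yu; rewrite !inE; apply/andP; split; first by apply: contraNneq fu' => <-.
      move: yu; rewrite /u'; case: (f \in u) => yu; last exact: (subsetP uU).
      exact: (subsetP (sdiff_sub uU (WU _ Ww0))).
    + move=> x xU' xperp.
      have fx : f \notin x by apply/negP => /(subsetP xU'); rewrite !inE eqxx.
      have [b Hb] : {b | dot x w0 = b} by exists (dot x w0).
      have [xh Hxh] : {xh | xh = if b then f |: x else x} by eexists.
      have dotxh : forall w, dot xh w = dot x w (+) (b && (f \in w)).
        move=> w; rewrite Hxh; destruct b; last by rewrite addbF.
        by rewrite setU1_sdiff // dot_sdiffl dot1 addbC.
      have xhperp : forall w, W w -> ~~ dot xh w.
        move=> w Ww; rewrite dotxh; case fw: (f \in w).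
          have W'd : W' (sdiff w w0) by split; [exact: WD | rewrite in_sdiff fw fw0].
          have := xperp _ W'd; rewrite dot_sdiffr Hb => /negbTE.
          by case: (dot x w); destruct b.
        by rewrite andbF addbF; apply: xperp; split => //; rewrite fw.
      have xhU : xh \subset U.
        rewrite Hxh; destruct b; last exact: subset_trans xU' (subsetDl _ _).
        by rewrite subUset sub1set fU (subset_trans xU' (subsetDl _ _)).
      have := Hperp _ xhU xhperp; have := xhperp _ Ww0.
      have -> : dot x u' = dot xh u' by rewrite dotxh (negbTE fu') andbF addbF.
      move=> H1 H2; rewrite /u'; case: (f \in u) => //.
      by rewrite dot_sdiffr (negbTE H1) (negbTE H2).
  case: Wu' => Wu' _; move: Wu'; rewrite /u'; case fu: (f \in u) => // H.
  by have := WD _ _ H Ww0; rewrite -sdiffA sdiffvv sdiff0.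
- have fu : f \notin u.
    have := Hperp [set f]; rewrite dot1; apply; first by rewrite sub1set.
    by move=> w Ww; rewrite dot1; apply/negP => fw; apply: nofW; exists w.
  apply: (IH W (U :\ f)) => //.
  + move=> w Ww; apply/subsetP=> y yw; rewrite !inE (subsetP (WU _ Ww)) // andbT.
    by apply/negP => /eqP ey; apply: nofW; exists w; rewrite -ey.
  + apply/subsetP=> y yu; rewrite !inE (subsetP uU) // andbT.
    by apply: contraNneq fu => <-.
  + move=> x xU'; apply: Hperp; exact: subset_trans xU' (subsetDl _ _).
Qed.

Lemma sdiff_ind (P : {set T} -> Prop) (A : {set T}) :
  P set0 -> (forall x y, P x -> P y -> P (sdiff x y)) ->
  (forall x, x \in A -> P [set x]) -> P A.
Proof.
move=> P0 PD P1; have [n] := ubnP #|A|; elim: n A P1 => // n IH A P1 ltA.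
case: (set_0Vmem A) => [->|[t tA]] //.
have -> : A = sdiff [set t] (A :\ t).
  apply/setP=> y; rewrite in_sdiff !inE; case: eqP => [->|]; by rewrite ?tA.
apply: PD; first exact: P1.
apply: IH; first by move=> x; rewrite inE => /andP [_]; apply: P1.
by rewrite (cardsD1 t A) tA in ltA.
Qed.

Lemma sdiff_setI_pred A B (p : pred T) :
  [set x in sdiff A B | p x] = sdiff [set x in A | p x] [set x in B | p x].
Proof. by apply/setP=> x; rewrite !(inE, in_sdiff); case: (x \in A); case: (x \in B); case: (p x). Qed.

End Gen.

Section Bd.
Variable C : finType.
Implicit Types A B Tr : {set {set C}}.

Lemma bd2_sdiff A B : bd2 (sdiff A B) = sdiff (bd2 A) (bd2 B).
Proof.
apply/setP=> e; rewrite in_sdiff !inE sdiff_setI_pred odd_sdiff.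
by case: (is_edge e).
Qed.

Lemma bd2_0 : bd2 (set0 : {set {set C}}) = set0.
Proof.
apply/setP=> e; rewrite !inE.
have -> : [set t in (set0 : {set {set C}}) | e \subset t] = set0 by apply/setP=> t; rewrite !inE.
by rewrite cards0 andbF.
Qed.

Lemma bd2_tri_parity (t : {set C}) (v : C) : is_tri t ->
  ~~ odd #|[set e in bd2 [set t] | v \in e]|.
Proof.
move=> /eqP t3.
have -> : [set e in bd2 [set t] | v \in e] = [set e | is_edge e & (e \subset t) && (v \in e)].
  apply/setP=> e; rewrite !inE.
  have -> : [set t' in [set t] | e \subset t'] = if e \subset t then [set t] else set0.
    case et: (e \subset t); apply/setP=> t'; rewrite !inE; case: eqP => [->|] //=; by rewrite ?et ?andbF.
  by case: (e \subset t); rewrite ?cards1 ?cards0 ?andbT ?andbF.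
case vt: (v \in t); last first.
  have -> : [set e | is_edge e & (e \subset t) && (v \in e)] = set0.
    apply/setP=> e; rewrite !inE; apply/negbTE; apply/negP => /and3P [_ et ve].
    by move: vt; rewrite (subsetP et v ve).
  by rewrite cards0.
have -> : [set e | is_edge e & (e \subset t) && (v \in e)] = [set [set v; u] | u in t :\ v].
  apply/setP=> e; rewrite !inE; apply/idP/imsetP.
  - move=> /and3P [/eqP e2 et ve].
    have : #|e :\ v| = 1%N by move: e2; rewrite (cardsD1 v e) ve => [[]].
    move/eqP/cards1P => [u eu]; exists u.
      have ue : u \in e :\ v by rewrite eu set11.
      by rewrite !inE; move: ue; rewrite !inE => /andP [-> /(subsetP et) ->].
    apply/setP=> y; rewrite !inE; case: (eqVneq y v) => [->|yv] /=; first by rewrite ve.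
    by rewrite -in_set1 -eu !inE yv.
  - move=> [u]; rewrite !inE => /andP [uv ut] ->.
    rewrite /is_edge cards2 (eq_sym v u) uv /= !inE eqxx /= andbT.
    by apply/subsetP=> y; rewrite !inE => /orP [/eqP ->|/eqP ->].
rewrite card_in_imset.
  by move: t3; rewrite (cardsD1 v t) vt add1n => [[->]].
move=> u1 u2; rewrite !inE => /andP [u1v _] /andP [u2v _] /setP /(_ u1).
rewrite !inE eqxx orbT (negbTE u1v) /= => /esym /eqP.
done.
Qed.

Lemma bd2_cycle Tr (v : C) : (forall t, t \in Tr -> is_tri t) ->
  ~~ odd #|[set e in bd2 Tr | v \in e]|.
Proof.
move=> HT; apply: (sdiff_ind (P := fun X => ~~ odd #|[set e in bd2 X | v \in e]|)).
- rewrite bd2_0; have -> : [set e in (set0 : {set {set C}}) | v \in e] = set0 by apply/setP=> e; rewrite !inE.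
  by rewrite cards0.
- move=> x y Hx Hy; rewrite bd2_sdiff sdiff_setI_pred odd_sdiff.
  by rewrite (negbTE Hx) (negbTE Hy).
- by move=> t tT; apply: bd2_tri_parity; apply: HT.
Qed.

Lemma lead_vec (W : {set {set C}} -> Prop) (U L : {set {set C}}) (e : {set C}) :
  W set0 -> (forall x y : {set {set C}}, W x -> W y -> W (sdiff x y)) ->
  leading W U L -> e \in L -> exists w, W w /\ w :&: L = [set e].
Proof.
move=> W0 WD [LU Hl] eL.
pose W' := fun p : {set {set C}} => exists w, W w /\ p = w :&: L.
have : W' [set e].
  apply: (double_perp (U := L)).
  - by exists set0; split => //; rewrite set0I.
  - move=> x y [w1 [Hw1 ->]] [w2 [Hw2 ->]]; exists (sdiff w1 w2); split; first exact: WD.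
    by rewrite sdiffI.
  - by move=> p [w [_ ->]]; apply: subsetIr.
  - by rewrite sub1set.
  - move=> x xL xperp.
    have [x0 [_ Hu]] := Hl set0 (sub0set _).
    have sol0 : solution W U set0 /\ set0 :\: L = set0.
      by split; [split; [exact: sub0set | by move=> w _; rewrite set0I cards0] | rewrite set0D].
    have solx : solution W U x /\ x :\: L = set0.
      split; last by apply/eqP; rewrite setD_eq0.
      split; first exact: subset_trans xL LU.
      move=> w Ww; have := xperp (w :&: L); rewrite dot_sub_eq //; apply.
      by exists w.
    by rewrite -(Hu _ solx) (Hu _ sol0) dot0.
by move=> [w [Ww E]]; exists w.
Qed.

End Bd.

Section Main.
Local Open Scope ring_scope.
Variable R : realFieldType.
Variable C : finType.
Variables (K : {set {set C}}) (ent : {set C} -> R) (rk : {set C} -> nat).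
Variables (T Crit : {set {set C}}) (d : {set C} -> option R).
Hypothesis Hfil : is_filtration K ent.
Hypothesis Hco : compatible_order K ent rk.
Hypothesis HT : forall e, e \in T <-> e \in edges K /\ ~ positive K rk e.
Hypothesis HCrit : forall e, e \in Crit <-> critical K ent rk e.
Hypothesis Hvd : valid_deaths K ent T Crit d.
Variable a : R.
Hypothesis Ha : 0 <= a.

Notation H := (HoPeSa K ent T Crit d a).
Notation Qa := (Q K ent a).

Definition deadby (f : {set C}) : bool := if d f is Some c then c <= a else false.

Lemma elenP (x : {set C}) (y : R) : (elen ent x <= 2%:R * y) = (ent x <= y).
Proof. by rewrite /elen ler_pM2l // ltr0n. Qed.

Lemma rk_ent s t : s \in K -> t \in K -> (rk s < rk t)%N -> ent s <= ent t.
Proof.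
move=> sK tK lt; case: Hco => _ H2 _; rewrite leNgt; apply/negP => /(H2 _ _ tK sK).
by move=> /(ltn_trans lt); rewrite ltnn.
Qed.

Lemma T_edge e : e \in T -> e \in edges K.
Proof. by move/HT => []. Qed.

Lemma Crit_edge e : e \in Crit -> e \in edges K.
Proof. by move/HCrit => [] . Qed.

Lemma Crit_notT e : e \in Crit -> e \notin T.
Proof.
move/HCrit => [_ [z [Hz ez _]]]; apply/negP => /HT [_]; apply; by exists z.
Qed.

Lemma in_edgesH e : e \in edges H =
  ((e \in T) && (ent e <= a)) || [&& e \in Crit, ent e <= a & ~~ deadby e].
Proof.
rewrite /edges /HoPeSa /MSTa !inE !elenP /deadby.
case E2: (is_edge e).
  by move: E2; rewrite /is_edge => /eqP ->; rewrite /= andbF andbT.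
rewrite andbF; apply/esym/negbTE/orP => [[/andP [eT _]|/and3P [eC _ _]]].
  by move: (T_edge eT); rewrite inE E2 andbF.
by move: (Crit_edge eC); rewrite inE E2 andbF.
Qed.

Lemma sdiff_swap (A B X Y : {set {set C}}) :
  sdiff (sdiff A B) (sdiff X Y) = sdiff (sdiff A X) (sdiff B Y).
Proof. apply/setP=> x; rewrite !in_sdiff; by case: (x \in A); case: (x \in B); case: (x \in X); case: (x \in Y). Qed.

Definition Rep (z : {set {set C}}) : Prop :=
  exists h Tr : {set {set C}}, [/\ h \subset edges H, Tr \subset tris Qa & z = sdiff h (bd2 Tr)].

Lemma Rep0 : Rep set0.
Proof. by exists set0, set0; rewrite bd2_0 sdiff0 !sub0set. Qed.

Lemma RepD (x y : {set {set C}}) : Rep x -> Rep y -> Rep (sdiff x y).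
Proof.
move=> [h1 [T1 [h1H T1Q ->]]] [h2 [T2 [h2H T2Q ->]]].
exists (sdiff h1 h2), (sdiff T1 T2); split; try exact: sdiff_sub.
by rewrite bd2_sdiff sdiff_swap.
Qed.

Lemma RepH (e : {set C}) : e \in edges H -> Rep [set e].
Proof. by move=> eH; exists [set e], set0; rewrite bd2_0 sdiff0 sub1set eH sub0set. Qed.

Lemma RepB (Tr : {set {set C}}) : Tr \subset tris Qa -> Rep (bd2 Tr).
Proof.
move=> TQ; exists set0, Tr; split => //; first exact: sub0set.
by apply/setP => x; rewrite in_sdiff in_set0.
Qed.

Lemma Rep_set (z : {set {set C}}) : (forall e, e \in z -> Rep [set e]) -> Rep z.
Proof. move=> Hz; apply: sdiff_ind => //; [exact: Rep0 | exact: RepD]. Qed.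

Lemma tris_mono (b1 b2 : R) : b1 <= b2 -> tris (Q K ent b1) \subset tris (Q K ent b2).
Proof.
move=> le; apply/subsetP => t; rewrite !inE => /andP [/andP [tK tb] ->].
by rewrite tK (le_trans tb le).
Qed.

Lemma kerf0 (b : R) (U : {set {set C}}) : in_kerf K ent T b U set0.
Proof.
split; first exact: sub0set.
by exists set0; rewrite bd2_0 sdiff0 !sub0set.
Qed.

Lemma kerfD (b : R) (U : {set {set C}}) (w1 w2 : {set {set C}}) :
  in_kerf K ent T b U w1 -> in_kerf K ent T b U w2 -> in_kerf K ent T b U (sdiff w1 w2).
Proof.
move=> [w1U [T1 [T1Q m1]]] [w2U [T2 [T2Q m2]]]; split; first exact: sdiff_sub.
exists (sdiff T1 T2); split; first exact: sdiff_sub.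
by rewrite bd2_sdiff sdiff_swap; apply: sdiff_sub.
Qed.

Lemma MSTa_H (b : R) : b <= a -> MSTa ent T b \subset edges H.
Proof.
move=> ba; apply/subsetP => e eM; rewrite in_edgesH; move: eM.
by rewrite inE elenP => /andP [-> eb]; rewrite (le_trans eb ba).
Qed.

Definition later (b : R) := [set f in Crit | if d f is Some c then (b < c) && (c <= a) else false].

Lemma dead_rep_n n : forall (e : {set C}) (b : R), (#|later b| < n)%N ->
  e \in Crit -> d e = Some b -> b <= a -> Rep [set e].
Proof.
elim: n => // n IH e b lt eC de ba.
have [b0 eb] : 0 <= b /\ ent e <= b := Hvd.2 e b eC de.
pose U := Uset ent Crit d b.
pose L := [set f in U | d f == Some b].
have eL : e \in L by rewrite !inE eC eb de /= ltxx eqxx.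
have [[LU Hl] _] := Hvd.1 b b0.
have [w [Ww wL]] := lead_vec (kerf0 b U) (@kerfD b U) (conj LU Hl) eL.
case: Ww => wU [Tr [TrQ mM]].
have ew : e \in w.
  have : e \in w :&: L by rewrite wL set11.
  by rewrite inE => /andP [].
have -> : [set e] = sdiff (sdiff (w :\ e) (sdiff w (bd2 Tr))) (bd2 Tr).
  apply/setP => x; rewrite !in_sdiff in_setD1 in_set1.
  case: (eqVneq x e) => [->|xe] /=; rewrite ?ew;
    [by case: (e \in bd2 Tr) | by case: (x \in w); case: (x \in bd2 Tr)].
apply: RepD; last exact: RepB (subset_trans TrQ (tris_mono ba)).
apply: RepD; last first.
  apply: Rep_set => f fm; apply: RepH.
  exact: (subsetP (MSTa_H ba) f (subsetP mM f fm)).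
apply: Rep_set => f; rewrite in_setD1 => /andP [fe fw].
have fU := subsetP wU f fw.
have fL : f \notin L.
  apply/negP => fL; have : f \in w :&: L by rewrite inE fw fL.
  by rewrite wL inE (negbTE fe).
move: fU fL; rewrite !inE => /and3P [fC fb fnd].
rewrite fC fb fnd /=.
have fa : ent f <= a := le_trans fb ba.
case df: (d f) => [c|] fneq; last first.
  by apply: RepH; rewrite in_edgesH fC fa /deadby df /= orbT.
case ca: (c <= a); last first.
  by apply: RepH; rewrite in_edgesH fC fa /deadby df ca /= orbT.
have bc : b < c.
  move: fnd fneq; rewrite df /= -leNgt => bc; rewrite lt_neqAle bc andbT.
  by apply: contraNneq => ->.
apply: (IH f c) => //.
have pr : later c \proper later b.
  apply/properP; split.
    apply/subsetP => g; rewrite !inE => /andP [-> ].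
    by case: (d g) => // c' /andP [cc' ->]; rewrite (lt_trans bc cc').
  exists f; rewrite !inE fC df ?bc ?ca //=.
  by rewrite ltxx.
by apply: leq_trans (proper_card pr) _.
Qed.

Lemma dead_rep (e : {set C}) (b : R) : e \in Crit -> d e = Some b -> b <= a -> Rep [set e].
Proof. exact: (@dead_rep_n #|later b|.+1). Qed.

Lemma edge_rep_n n : forall e : {set C}, (rk e < n)%N -> e \in edges Qa -> Rep [set e].
Proof.
elim: n => // n IH e lt eQ.
have eK : e \in K by move: eQ; rewrite !inE => /andP [/andP []].
have ea : ent e <= a by move: eQ; rewrite !inE => /andP [/andP []].
have e2 : is_edge e by move: eQ; rewrite !inE => /andP [].
have eKe : e \in edges K by rewrite inE eK e2.
case: (boolP (e \in T)) => eT.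
  by apply: RepH; rewrite in_edgesH eT ea.
have pos : positive K rk e.
  by apply: NNPP => np; move/negP: eT; apply; apply/HT.
case: (boolP (e \in Crit)) => eC.
  case de: (d e) => [b|]; last by apply: RepH; rewrite in_edgesH eC ea /deadby de orbT.
  case ba: (b <= a); first exact: dead_rep eC de ba.
  by apply: RepH; rewrite in_edgesH eC ea /deadby de ba orbT.
have nc : ~ critical K ent rk e by move=> /HCrit; rewrite (negbTE eC).
case: pos => z [zc ez].
have [z' [z'c bz]] : exists z', cycle1 (before K rk e) z' /\ bound1 (Q K ent (ent e)) (sdiff z z').
  apply: NNPP => nex; apply: nc; split => //; exists z; split => // z' cz' bnd.
  by apply: nex; exists z'.
case: bz => Tr [TrQ Ez].
have -> : [set e] = sdiff (sdiff (z :\ e) z') (bd2 Tr).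
  rewrite -Ez; apply/setP => x; rewrite !in_sdiff in_setD1 in_set1.
  case: (eqVneq x e) => [->|xe] /=; rewrite ?ez;
    [by case: (e \in z') | by case: (x \in z); case: (x \in z')].
have small : forall f, f \in before K rk e -> is_edge f -> Rep [set f].
  move=> f; rewrite inE => /andP [fK fr] f2; apply: IH.
    exact: leq_trans fr lt.
  by rewrite !inE fK f2 (le_trans (rk_ent fK eK fr) ea).
apply: RepD; last exact: RepB (subset_trans TrQ (tris_mono ea)).
apply: RepD.
  apply: Rep_set => f; rewrite in_setD1 => /andP [fe fz].
  move: (subsetP zc.1 f fz); rewrite inE => /andP [fb f2].
  move: fb; rewrite in_setU1 (negbTE fe) /= => fb.
  exact: small.
apply: Rep_set => f fz.
move: (subsetP z'c.1 f fz); rewrite inE => /andP [fb f2].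
exact: small.
Qed.

Lemma edge_rep (e : {set C}) : e \in edges Qa -> Rep [set e].
Proof. exact: (@edge_rep_n (rk e).+1). Qed.

Lemma H_sub : H \subset Qa.
Proof.
apply/subsetP => s; rewrite /HoPeSa !inE elenP.
case/orP => [/orP [/andP [sK /cards1P [x ->]] | /andP [sT sa]] | /andP [sC /andP [sa _]]].
- by case: Hfil => _ _ H3 _ _; have [xK ->] := H3 x; rewrite xK.
- by move: (T_edge sT); rewrite inE => /andP [-> _].
- move: (Crit_edge sC); rewrite inE => /andP [-> _].
  by [].
Qed.

Lemma H_inj (z : {set {set C}}) : cycle1 H z -> bound1 Qa z -> bound1 H z.
Proof.
move=> [zH zpar] [Tr [TrQ zE]].
suff z0 : z = set0 by exists set0; rewrite bd2_0 z0 sub0set.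
pose w := [set f in z | f \notin T].
pose U := Uset ent Crit d a.
pose L := [set f in U | d f == Some a].
have wprop : forall f, f \in w -> f \in U /\ f \notin L.
  move=> f; rewrite inE => /andP [fz fT].
  move: (subsetP zH f fz); rewrite in_edgesH (negbTE fT) /= => /and3P [fC fa fd].
  move: fd; rewrite /deadby !inE fC fa /=; case: (d f) => [c|] //= ca.
  rewrite -leNgt ltW ?(negbT ca) //=; last by rewrite ltNge.
  split => //; apply/negP => /eqP [ca']; by move: ca; rewrite ca' lexx.
have [[LU Hl] _] := Hvd.1 a Ha.
have kw : in_kerf K ent T a U w.
  split; first by apply/subsetP => f /wprop [].
  exists Tr; split => //; rewrite -zE.
  apply/subsetP => f; rewrite in_sdiff; case fw: (f \in w).
    by move: fw; rewrite inE => /andP [->].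
  rewrite /= => fz; move: fw; rewrite inE fz /= => /negbFE fT.
  move: (subsetP zH f fz); rewrite in_edgesH fT /= => /orP [fa|/and3P [fC _ _]].
    by rewrite inE fT elenP fa.
  by move: (Crit_notT fC); rewrite fT.
have w0 : w = set0.
  apply/eqP; rewrite -subset0; apply/subsetP => f fw; exfalso.
  have [fU fL] := wprop f fw.
  have sub : [set f] \subset U :\: L by rewrite sub1set inE fU fL.
  have [x [[[xU xs] xd] _]] := Hl [set f] sub.
  have := xs w kw.
  have -> : x :&: w = [set f].
    apply/setP => y; rewrite inE in_set1.
    case yw: (y \in w); last first.
      by rewrite andbF; apply/esym/negbTE; apply: contraFneq yw => ->.
    have yL : y \notin L by have [] := wprop y yw.
    by rewrite andbT -in_set1 -xd in_setD yL.
  by rewrite cards1.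
have zT : z \subset T.
  apply/subsetP => f fz; apply: contraT => fT.
  have : f \in w by rewrite inE fz fT.
  by rewrite w0 inE.
case: (set_0Vmem z) => [//|[e0 e0z]].
case: (arg_maxnP rk e0z) => e ez emax.
have eT := subsetP zT e ez.
exfalso; move/HT: eT => [eK]; apply; exists z; split => //; split => //.
apply/subsetP => f fz; rewrite inE in_setU1.
have f2 : is_edge f by move: (subsetP zH f fz); rewrite inE => /andP [_ ->].
rewrite f2 andbT; case: (eqVneq f e) => //= fe.
have fK : f \in K by move: (T_edge (subsetP zT f fz)); rewrite inE => /andP [].
have eK' : e \in K by move: eK; rewrite inE => /andP [].
rewrite inE fK /= ltn_neqAle (_ : (rk f <= rk e)%N = true) ?andbT; last exact: emax.
apply/negP => /eqP fre; move/eqP: fe; apply; case: Hco => Hinj _ _.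
exact: Hinj fK eK' fre.
Qed.

Lemma H_surj (z : {set {set C}}) : cycle1 Qa z -> exists z', cycle1 H z' /\ bound1 Qa (sdiff z z').
Proof.
move=> [zQ zpar].
have : Rep z by apply: Rep_set => e ez; apply: edge_rep (subsetP zQ e ez).
move=> [h [Tr [hH TrQ zE]]].
have hE : h = sdiff z (bd2 Tr) by rewrite zE -sdiffA sdiffvv sdiff0.
exists h; split.
  split => // v; rewrite hE sdiff_setI_pred odd_sdiff (negbTE (zpar v)) /=.
  apply: bd2_cycle => t tT; move: (subsetP TrQ t tT); rewrite inE => /andP [_ ->].
  done.
exists Tr; split => //.
by rewrite zE sdiffC sdiffA sdiffvv sdiffC sdiff0.
Qed.

Lemma main_sec : H1_incl_iso H Qa.
Proof. split; [exact: H_sub | exact: H_inj | exact: H_surj]. Qed.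

End Main.

Local Open Scope ring_scope.

Theorem mainTheorem6 (R : realFieldType) (C : finType) (K : {set {set C}})
    (ent : {set C} -> R) (rk : {set C} -> nat) (T Crit : {set {set C}})
    (d : {set C} -> option R) :
  is_filtration K ent ->
  compatible_order K ent rk ->
  is_MST K ent T ->
  (forall e, e \in T <-> e \in edges K /\ ~ positive K rk e) ->
  (forall e, e \in Crit <-> critical K ent rk e) ->
  valid_deaths K ent T Crit d ->
  forall a : R, 0 <= a -> H1_incl_iso (HoPeSa K ent T Crit d a) (Q K ent a).
Proof.
move=> Hfil Hco _ HT HCrit Hvd a Ha.
exact: (main_sec Hfil Hco HT HCrit Hvd Ha).
Qed.
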